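(* For every simulation budget $T>0$, the function $w\mapsto \mathrm{APCS}(w)$ is concave on the open orthant $\{w=(w_1,\dots,w_k)\in\mathbb{R}^k : w_i>0 \text{ for all } i\in\mathcal{K}\}$. Consequently, maximizing $\mathrm{APCS}(w)$ subject to $\sum_{i\in\mathcal{K}} w_i=1$, $w_i> 0$ ($i\in\mathcal{K}$) is a convex optimization problem.
   Context: Let $k\ge 2$ and $\mathcal{K}=\{1,\dots,k\}$. For each $i\in\mathcal{K}$ fix real numbers $\mu_i$ and $\sigma_i>0$. Let $b\in\mathcal{K}$ be the unique index with $\mu_b<\mu_i$ for all $i\neq b$, and let $\mathcal{K}'=\mathcal{K}\setminus\{b\}$. Fix $T>0$. For $i\in\mathcal{K}'$ put $\delta_{i,b}=\mu_i-\mu_b>0$. For $w$ with all $w_i>0$ define $\sigma_{i,b}(w)=\sqrt{\sigma_i^2/(w_iT)+\sigma_b^2/(w_bT)}$ and $$\mathrm{APCS}(w)=1-\sum_{i\in\mathcal{K}'}\Phi\!\left(-\frac{\delta_{i,b}}{\sigma_{i,b}(w)}\right),$$ where $\Phi$ is the standard normal cumulative distribution function. *)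

(* Defs.v *)
(* Indices of K = {1..k} are represented by
   0..k-1 (nat), vectors by functions nat -> R (only coordinates < k matter). *)
From Stdlib Require Import Reals.
From Coquelicot Require Import Coquelicot.
Open Scope R_scope.

Definition std_normal_pdf (t : R) : R := exp (- (t ^ 2) / 2) / sqrt (2 * PI).
Definition Phi (x : R) : R :=
  RInt_gen std_normal_pdf (Rbar_locally m_infty) (at_point x).

Definition sum_except (k b : nat) (f : nat -> R) : R :=
  sum_f_R0 (fun i => if Nat.eq_dec i b then 0 else f i) (k - 1).

Definition sigma_ib (T : R) (sigma : nat -> R) (b i : nat) (w : nat -> R) : R :=
  sqrt (sigma i ^ 2 / (w i * T) + sigma b ^ 2 / (w b * T)).

Definition APCS (k b : nat) (T : R) (mu sigma : nat -> R) (w : nat -> R) : R :=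
  1 - sum_except k b
        (fun i => Phi (- ((mu i - mu b) / sigma_ib T sigma b i w))).

Definition pos_orthant (k : nat) (w : nat -> R) : Prop :=
  forall i, (i < k)%nat -> 0 < w i.

Definition concave_on (D : (nat -> R) -> Prop) (F : (nat -> R) -> R) : Prop :=
  forall (w v : nat -> R) (t : R), D w -> D v -> 0 <= t <= 1 ->
    t * F w + (1 - t) * F v <= F (fun i => t * w i + (1 - t) * v i).

Definition convex_set (D : (nat -> R) -> Prop) : Prop :=
  forall (w v : nat -> R) (t : R), D w -> D v -> 0 <= t <= 1 ->
    D (fun i => t * w i + (1 - t) * v i).

Definition simplex_feasible (k : nat) (w : nat -> R) : Prop :=
  pos_orthant k w /\ sum_f_R0 w (k - 1) = 1.

(* Main.v *)
Require Import Defs.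
From Stdlib Require Import Reals Lra Psatz Lia.
From Coquelicot Require Import Coquelicot.
Open Scope R_scope.


Lemma harm_le : forall P Q l, 0 < P -> 0 < Q ->
  1 / (1/P + 1/Q) <= l^2 * P + (1-l)^2 * Q.
Proof.
  intros. replace (1 / (1/P + 1/Q)) with (P*Q/(P+Q)) by (field; lra).
  apply Rmult_le_reg_r with (P+Q). lra.
  unfold Rdiv. rewrite Rmult_assoc, Rinv_l, Rmult_1_r by lra.
  pose proof (pow2_ge_0 (l*P - (1-l)*Q)). nra.
Qed.

Lemma harm_conc : forall P1 Q1 P2 Q2 t, 0 < P1 -> 0 < Q1 -> 0 < P2 -> 0 < Q2 -> 0 <= t <= 1 ->
  t * (1/(1/P1+1/Q1)) + (1-t)*(1/(1/P2+1/Q2)) <=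
  1/(1/(t*P1+(1-t)*P2) + 1/(t*Q1+(1-t)*Q2)).
Proof.
  intros. set (P := t*P1+(1-t)*P2). set (Q := t*Q1+(1-t)*Q2).
  assert (0 < P) by (unfold P; nra). assert (0 < Q) by (unfold Q; nra).
  set (l := Q/(P+Q)).
  assert (E : 1/(1/P+1/Q) = l^2*P + (1-l)^2*Q) by (unfold l; field; lra).
  rewrite E.
  pose proof (harm_le P1 Q1 l H H0). pose proof (harm_le P2 Q2 l H1 H2).
  unfold P, Q.
  assert (t * (1/(1/P1+1/Q1)) <= t*(l^2 * P1 + (1-l)^2 * Q1)) by (apply Rmult_le_compat_l; lra).
  assert ((1-t) * (1/(1/P2+1/Q2)) <= (1-t)*(l^2 * P2 + (1-l)^2 * Q2)) by (apply Rmult_le_compat_l; lra).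
  nra.
Qed.

Lemma sqrt_conc : forall a b t, 0 <= a -> 0 <= b -> 0 <= t <= 1 ->
  t * sqrt a + (1-t) * sqrt b <= sqrt (t*a + (1-t)*b).
Proof.
  intros. pose proof (sqrt_pos a). pose proof (sqrt_pos b).
  rewrite <- (sqrt_pow2 (t * sqrt a + (1-t) * sqrt b)) by (apply Rplus_le_le_0_compat; apply Rmult_le_pos; lra).
  apply sqrt_le_1_alt.
  pose proof (sqrt_sqrt a H) as Sa. pose proof (sqrt_sqrt b H0) as Sb.
  assert (0 <= t*(1-t)*(sqrt a - sqrt b)^2) by (apply Rmult_le_pos; [apply Rmult_le_pos; lra | apply pow2_ge_0]).
  assert (E : t*a + (1-t)*b - (t * sqrt a + (1-t) * sqrt b)^2 = t*(1-t)*(sqrt a - sqrt b)^2).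
  { rewrite <- Sa at 1. rewrite <- Sb at 1. ring. }
  lra.
Qed.

Definition Sx (A C T x y : R) := A/(x*T) + C/(y*T).

Lemma z_conc : forall d A C T x1 y1 x2 y2 t, 0 <= d -> 0 < A -> 0 < C -> 0 < T ->
  0 < x1 -> 0 < y1 -> 0 < x2 -> 0 < y2 -> 0 <= t <= 1 ->
  t * (d / sqrt (Sx A C T x1 y1)) + (1-t) * (d / sqrt (Sx A C T x2 y2)) <=
  d / sqrt (Sx A C T (t*x1+(1-t)*x2) (t*y1+(1-t)*y2)).
Proof.
  intros.
  assert (Hz : forall x y, 0 < x -> 0 < y ->
     d / sqrt (Sx A C T x y) = d * sqrt (1/(1/(x*T/A) + 1/(y*T/C)))).
  { intros. unfold Rdiv at 1. rewrite <- sqrt_inv. f_equal. f_equal.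
    unfold Sx. field. repeat split; try lra; nra. }
  assert (0 < t*x1+(1-t)*x2) by nra. assert (0 < t*y1+(1-t)*y2) by nra.
  rewrite !Hz by auto.
  assert (Hp : forall x y, 0 < x -> 0 < y -> 0 <= 1/(1/(x*T/A) + 1/(y*T/C))).
  { intros. left. apply Rdiv_lt_0_compat. lra.
    apply Rplus_lt_0_compat; apply Rdiv_lt_0_compat; try lra;
    apply Rdiv_lt_0_compat; nra. }
  pose proof (harm_conc (x1*T/A) (y1*T/C) (x2*T/A) (y2*T/C) t) as HH.
  assert (Hpos : forall x D, 0 < x -> 0 < D -> 0 < x*T/D) by (intros; apply Rdiv_lt_0_compat; nra).
  specialize (HH (Hpos _ _ H3 H0) (Hpos _ _ H4 H1) (Hpos _ _ H5 H0) (Hpos _ _ H6 H1) H7).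
  replace ((t*x1+(1-t)*x2)*T/A) with (t*(x1*T/A) + (1-t)*(x2*T/A)) by (field; lra).
  replace ((t*y1+(1-t)*y2)*T/C) with (t*(y1*T/C) + (1-t)*(y2*T/C)) by (field; lra).
  pose proof (sqrt_conc _ _ t (Hp x1 y1 H3 H4) (Hp x2 y2 H5 H6) H7).
  pose proof (sqrt_le_1_alt _ _ HH).
  assert (t * sqrt (1 / (1 / (x1 * T / A) + 1 / (y1 * T / C))) +
    (1 - t) * sqrt (1 / (1 / (x2 * T / A) + 1 / (y2 * T / C))) <=
    sqrt (1 / (1 / (t * (x1 * T / A) + (1 - t) * (x2 * T / A)) +
      1 / (t * (y1 * T / C) + (1 - t) * (y2 * T / C))))) by lra.
  apply Rmult_le_compat_l with (r := d) in H12; auto. nra.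
Qed.

Lemma sqrt2pi_pos : 0 < sqrt (2 * PI).
Proof. apply sqrt_lt_R0. pose proof PI_RGT_0. lra. Qed.

Lemma sqrt2pi_ge1 : 1 <= sqrt (2 * PI).
Proof. rewrite <- sqrt_1. apply sqrt_le_1_alt. pose proof PI2_1. lra. Qed.

Lemma pdf_cont : forall x, continuous std_normal_pdf x.
Proof.
  intros x. apply (@ex_derive_continuous R_AbsRing R_NormedModule). unfold std_normal_pdf.
  pose proof sqrt2pi_pos. auto_derive. lra.
Qed.

Lemma pdf_exRInt : forall a b, ex_RInt std_normal_pdf a b.
Proof. intros. apply (@ex_RInt_continuous R_CompleteNormedModule). intros; apply pdf_cont. Qed.

Lemma pdf_ge0 : forall x, 0 <= std_normal_pdf x.
Proof. intros. unfold std_normal_pdf. pose proof sqrt2pi_pos.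
  pose proof (exp_pos (- x^2/2)). apply Rlt_le. apply Rdiv_lt_0_compat; lra. Qed.

Lemma pdf_le_exp : forall x, x <= -2 -> std_normal_pdf x <= exp x.
Proof. intros. unfold std_normal_pdf. pose proof sqrt2pi_ge1.
  assert (exp (- x^2/2) <= exp x).
  { destruct (Req_dec (- x^2/2) x) as [E|E]. rewrite E; lra.
    left; apply exp_increasing. nra. }
  pose proof (exp_pos (- x^2/2)).
  unfold Rdiv. apply Rle_trans with (exp (- x^2/2) * 1).
  apply Rmult_le_compat_l. lra. rewrite <- Rinv_1. apply Rinv_le_contravar; lra. lra.
Qed.

Lemma pdf_mono : forall x y, x <= y <= 0 -> std_normal_pdf x <= std_normal_pdf y.
Proof. intros x y H. unfold std_normal_pdf. pose proof sqrt2pi_pos.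
  assert (exp (- x^2/2) <= exp (- y^2/2)).
  { destruct (Req_dec (- x^2/2) (- y^2/2)) as [E|E]. rewrite E; lra.
  left; apply exp_increasing. nra. }
  unfold Rdiv. apply Rmult_le_compat_r. left; apply Rinv_0_lt_compat; lra. exact H1. Qed.

Lemma tail_small : forall u v M, u <= v -> v <= M -> M <= -2 ->
  RInt std_normal_pdf u v <= exp M.
Proof.
  intros u v M H1 H2 H3.
  assert (HE : is_RInt exp u v (minus (exp v) (exp u))).
  { apply (is_RInt_derive exp exp). intros; apply is_derive_exp.
    intros; apply (@ex_derive_continuous R_AbsRing R_NormedModule). exists (exp x). apply is_derive_exp. }
  apply Rle_trans with (RInt exp u v).
  apply RInt_le; auto. apply pdf_exRInt. eexists; eauto.
  intros; apply pdf_le_exp; lra.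
  rewrite (is_RInt_unique _ _ _ _ HE). unfold minus, plus, opp; simpl.
  pose proof (exp_pos u).
  destruct (Req_dec v M). subst; lra. pose proof (exp_increasing v M). lra.
Qed.

Lemma Phi_ex : forall x, ex_RInt_gen std_normal_pdf (Rbar_locally m_infty) (at_point x).
Proof.
  intros x.
  assert (Hl : exists l : R, filterlim (fun a => RInt std_normal_pdf a x) (Rbar_locally m_infty) (locally l)).
  { apply (@Hierarchy.filterlim_locally_cauchy R R_CompleteSpace (Rbar_locally m_infty) _).
    intros eps.
    exists (fun a => a < Rmin (-2) (ln eps)). split.
    { exists (Rmin (-2) (ln eps)). auto. }
    intros u v Hu Hv.
    change (Rabs (RInt std_normal_pdf v x - RInt std_normal_pdf u x) < eps).
    assert (HC : forall p q, RInt std_normal_pdf p x = RInt std_normal_pdf p q + RInt std_normal_pdf q x).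
    { intros. symmetry. apply (RInt_Chasles std_normal_pdf p q x); apply pdf_exRInt. }
    pose proof (Rmin_l (-2) (ln eps)). pose proof (Rmin_r (-2) (ln eps)).
    assert (Hm : exp (Rmin (-2) (ln eps)) <= eps).
    { rewrite <- (exp_ln eps) at 2 by (destruct eps; simpl; lra).
      destruct (Req_dec (Rmin (-2) (ln eps)) (ln eps)) as [E|E]. rewrite E; lra.
      left; apply exp_increasing; lra. }
    assert (Hb : forall p q, p <= q -> q < Rmin (-2) (ln eps) ->
       0 <= RInt std_normal_pdf p q < eps).
    { intros p q Hpq Hq. split.
      apply RInt_ge_0; auto; [apply pdf_exRInt| intros; apply pdf_ge0].
      apply Rle_lt_trans with (exp q). apply tail_small; lra.
      apply Rlt_le_trans with (exp (Rmin (-2) (ln eps))); auto.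
      apply exp_increasing; auto. }
    destruct (Rle_dec u v).
    - rewrite (HC u v). specialize (Hb u v r Hv).
      rewrite Rabs_left1; lra.
    - rewrite (HC v u). specialize (Hb v u ltac:(lra) Hu).
      rewrite Rabs_right; lra. }
  destruct Hl as [l Hl]. exists l.
  intros P HP. specialize (Hl P HP).
  exists (fun a => P (RInt std_normal_pdf a x)) (fun b => b = x).
  - exact Hl.
  - reflexivity.
  - intros a b Ha Hb. subst b. exists (RInt std_normal_pdf a x). split; auto.
    apply (RInt_correct std_normal_pdf a x), pdf_exRInt.
Qed.

Lemma Phi_diff : forall x y, Phi x = Phi y + RInt std_normal_pdf y x.
Proof.
  intros. unfold Phi.
  rewrite <- (RInt_gen_Chasles std_normal_pdf y (Phi_ex y)).
  rewrite RInt_gen_at_point. reflexivity. apply pdf_exRInt.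
  apply ex_RInt_gen_at_point. apply pdf_exRInt.
Qed.

Definition Kf (z : R) := RInt std_normal_pdf (-z) 0.

Lemma K_diff : forall p q, Kf q - Kf p = RInt std_normal_pdf (-q) (-p).
Proof. intros. unfold Kf. rewrite <- (RInt_Chasles std_normal_pdf (-q) (-p) 0) by apply pdf_exRInt.
  unfold plus; simpl. ring. Qed.

Lemma K_mono : forall p q, p <= q -> Kf p <= Kf q.
Proof. intros. assert (0 <= Kf q - Kf p); [|lra]. rewrite K_diff.
  apply RInt_ge_0; [lra|apply pdf_exRInt|intros; apply pdf_ge0]. Qed.

Lemma K_conc_ord : forall z1 z2 t, 0 <= z1 <= z2 -> 0 <= t <= 1 ->
  t * Kf z1 + (1 - t) * Kf z2 <= Kf (t*z1 + (1-t)*z2).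
Proof.
  intros z1 z2 t Hz Ht. set (zc := t*z1 + (1-t)*z2).
  assert (Hc : z1 <= zc <= z2) by (unfold zc; nra).
  set (p := std_normal_pdf (-zc)).
  assert (A : (zc - z1) * p <= Kf zc - Kf z1).
  { rewrite K_diff. replace ((zc - z1) * p) with (RInt (fun _ => p) (-zc) (-z1)).
    apply RInt_le. lra. apply ex_RInt_const. apply pdf_exRInt.
    intros. apply pdf_mono; lra.
    rewrite RInt_const. unfold scal; simpl; unfold mult; simpl. ring. }
  assert (B : Kf z2 - Kf zc <= (z2 - zc) * p).
  { rewrite K_diff. replace ((z2 - zc) * p) with (RInt (fun _ => p) (-z2) (-zc)).
    apply RInt_le. lra. apply pdf_exRInt. apply ex_RInt_const.
    intros. apply pdf_mono; lra.
    rewrite RInt_const. unfold scal; simpl; unfold mult; simpl. ring. }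
  assert (Hp : 0 <= p) by apply pdf_ge0.
  assert (E1 : zc - z1 = (1-t)*(z2-z1)) by (unfold zc; ring).
  assert (E2 : z2 - zc = t*(z2-z1)) by (unfold zc; ring).
  rewrite E1 in A. rewrite E2 in B.
  assert (t * ((1-t)*(z2-z1)*p) <= t * (Kf zc - Kf z1)) by (apply Rmult_le_compat_l; lra).
  assert ((1-t) * (Kf z2 - Kf zc) <= (1-t) * (t*(z2-z1)*p)) by (apply Rmult_le_compat_l; lra).
  nra.
Qed.

Lemma K_conc : forall z1 z2 zm t, 0 <= z1 -> 0 <= z2 -> 0 <= t <= 1 ->
  t*z1 + (1-t)*z2 <= zm -> t * Kf z1 + (1 - t) * Kf z2 <= Kf zm.
Proof.
  intros. apply Rle_trans with (Kf (t*z1 + (1-t)*z2)); [|apply K_mono; auto].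
  destruct (Rle_dec z1 z2).
  - apply K_conc_ord; lra.
  - pose proof (K_conc_ord z2 z1 (1-t) ltac:(lra) ltac:(lra)).
    replace (t*z1 + (1-t)*z2) with ((1-t)*z2 + (1-(1-t))*z1) by ring. lra.
Qed.

Lemma Phi_conv : forall z1 z2 zm t, 0 <= z1 -> 0 <= z2 -> 0 <= t <= 1 ->
  t*z1 + (1-t)*z2 <= zm -> Phi (-zm) <= t * Phi (-z1) + (1-t) * Phi (-z2).
Proof.
  intros. pose proof (K_conc z1 z2 zm t H H0 H1 H2).
  assert (HP : forall z, Phi (-z) = Phi 0 - Kf z).
  { intros. unfold Kf. rewrite (Phi_diff 0 (-z)). ring. }
  rewrite !HP. nra.
Qed.

Lemma sum_conv : forall n (g f1 f2 : nat -> R) t,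
  (forall i, (i <= n)%nat -> g i <= t * f1 i + (1-t) * f2 i) ->
  sum_f_R0 g n <= t * sum_f_R0 f1 n + (1-t) * sum_f_R0 f2 n.
Proof.
  induction n; intros; simpl.
  - apply H; lia.
  - assert (sum_f_R0 g n <= t * sum_f_R0 f1 n + (1-t) * sum_f_R0 f2 n) by (apply IHn; intros; apply H; lia).
    assert (g (S n) <= t * f1 (S n) + (1-t) * f2 (S n)) by (apply H; lia).
    lra.
Qed.

Lemma sum_lin : forall n (w v : nat -> R) t,
  sum_f_R0 (fun i => t * w i + (1-t) * v i) n = t * sum_f_R0 w n + (1-t) * sum_f_R0 v n.
Proof. induction n; intros; simpl. ring. rewrite IHn. ring. Qed.

Lemma se_conv : forall k b (f g h : nat -> R) t, (1 <= k)%nat ->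
  (forall i, (i < k)%nat -> i <> b -> f i <= t * g i + (1-t) * h i) ->
  sum_except k b f <= t * sum_except k b g + (1-t) * sum_except k b h.
Proof.
  intros. unfold sum_except. apply sum_conv. intros.
  destruct (Nat.eq_dec i b). lra. apply H0; auto. lia.
Qed.

Theorem lemma1 (k b : nat) (mu sigma : nat -> R) (T : R) :
  (2 <= k)%nat -> (b < k)%nat ->
  (forall i, (i < k)%nat -> i <> b -> mu b < mu i) ->
  (forall i, (i < k)%nat -> 0 < sigma i) ->
  0 < T ->
  concave_on (pos_orthant k) (APCS k b T mu sigma) /\
  convex_set (simplex_feasible k).
Proof.
  intros Hk Hb Hmu Hsig HT. split.
  - intros w v t Hw Hv Ht. unfold APCS.
    assert (forall i, (i < k)%nat -> i <> b ->
      Phi (- ((mu i - mu b) / sigma_ib T sigma b i (fun j => t * w j + (1 - t) * v j)))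
      <= t * Phi (- ((mu i - mu b) / sigma_ib T sigma b i w))
       + (1-t) * Phi (- ((mu i - mu b) / sigma_ib T sigma b i v))).
    { intros i Hi Hib.
      pose proof (Hmu i Hi Hib). pose proof (Hsig i Hi). pose proof (Hsig b Hb).
      pose proof (Hw i Hi). pose proof (Hw b Hb). pose proof (Hv i Hi). pose proof (Hv b Hb).
      unfold sigma_ib.
      change (sigma i ^ 2 / ((t * w i + (1 - t) * v i) * T) + sigma b ^ 2 / ((t * w b + (1 - t) * v b) * T))
        with (Sx (sigma i ^ 2) (sigma b ^ 2) T (t * w i + (1 - t) * v i) (t * w b + (1 - t) * v b)).
      change (sigma i ^ 2 / (w i * T) + sigma b ^ 2 / (w b * T))
        with (Sx (sigma i ^ 2) (sigma b ^ 2) T (w i) (w b)).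
      change (sigma i ^ 2 / (v i * T) + sigma b ^ 2 / (v b * T))
        with (Sx (sigma i ^ 2) (sigma b ^ 2) T (v i) (v b)).
      assert (Hnn : forall x y, 0 < x -> 0 < y -> 0 <= (mu i - mu b) / sqrt (Sx (sigma i ^ 2) (sigma b ^ 2) T x y)).
      { intros. unfold Rdiv. apply Rmult_le_pos. lra. left. apply Rinv_0_lt_compat, sqrt_lt_R0.
        unfold Sx. apply Rplus_lt_0_compat; apply Rdiv_lt_0_compat; try nra. }
      apply Phi_conv; auto.
      apply z_conc; auto; try lra; nra. }
    pose proof (se_conv k b _ _ _ t ltac:(lia) H). lra.
  - intros w v t [Hw Sw] [Hv Sv] Ht. split.
    + intros i Hi. pose proof (Hw i Hi). pose proof (Hv i Hi).
      destruct (Req_dec t 0). subst; lra. nra.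
    + rewrite sum_lin, Sw, Sv. ring.
Qed.
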